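(* Let $K$ be a simplex in a topological vector space $F$ and let $T:K\to 2^{K}$ be a weakly naturally quasiconvex correspondence. Then $T$ has a fixed point, i.e. there exists $x^*\in K$ with $x^*\in T(x^* )$.
   Context: A simplex is the convex hull of a finite affinely independent set. $\Delta_{n-1}=\{(\lambda_1,\dots,\lambda_n)\in\mathbb{R}^n:\sum_{i=1}^n\lambda_i=1,\ \lambda_i\ge 0\}$. Weakly naturally quasiconvex (WNQ): let $X,Y$ be nonempty convex subsets of topological vector spaces. A correspondence $T:X\to 2^{Y}$ is weakly naturally quasiconvex if for each $n\in\mathbb{N}$ and each finite set $\{x_1,\dots,x_n\}\subset X$ there exist $y_i\in T(x_i)$ ($i=1,\dots,n$) and a bijection $g:\Delta_{n-1}\to\Delta_{n-1}$ (depending on $x_1,\dots,x_n$) of the form $g(\lambda_1,\dots,\lambda_n)=(g_1(\lambda_1),\dots,g_n(\lambda_n))$, where each $g_i:[0,1]\to[0,1]$ is continuous with $g_i(0)=0$ and $g_i(1)=1$, such that for every $(\lambda_1,\dots,\lambda_n)\in\Delta_{n-1}$ we have $\sum_{i=1}^n g_i(\lambda_i)y_i\in T\big(\sum_{i=1}^n\lambda_i x_i\big)$. *)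

(* Defs.v *)
From Stdlib Require Import Reals.
Open Scope R_scope.

(* A real vector space (the topology of F plays no role in the statement:
   simplices, convex combinations and the WNQ property are purely affine). *)
Record RVectorSpace := {
  vcarrier :> Type;
  vzero : vcarrier;
  vadd : vcarrier -> vcarrier -> vcarrier;
  vscal : R -> vcarrier -> vcarrier;
  vadd_assoc : forall u v w, vadd u (vadd v w) = vadd (vadd u v) w;
  vadd_comm : forall u v, vadd u v = vadd v u;
  vadd_zero : forall u, vadd u vzero = u;
  vadd_opp : forall u, vadd u (vscal (-1) u) = vzero;
  vscal_one : forall u, vscal 1 u = u;
  vscal_assoc : forall a b u, vscal a (vscal b u) = vscal (a * b) u;
  vscal_distr_v : forall a u v, vscal a (vadd u v) = vadd (vscal a u) (vscal a v);
  vscal_distr_r : forall a b u, vscal (a + b) u = vadd (vscal a u) (vscal b u)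
}.

Arguments vzero {_}.
Arguments vadd {_} _ _.
Arguments vscal {_} _ _.

Fixpoint vsum {V : RVectorSpace} (n : nat) (f : nat -> V) : V :=
  match n with
  | O => vzero
  | S k => vadd (vsum k f) (f k)
  end.

Fixpoint rsum (n : nat) (f : nat -> R) : R :=
  match n with
  | O => 0
  | S k => rsum k f + f k
  end.

Definition in_std_simplex (n : nat) (lam : nat -> R) : Prop :=
  rsum n lam = 1 /\ forall i, (i < n)%nat -> 0 <= lam i.

Definition affinely_independent {V : RVectorSpace} (m : nat) (v : nat -> V) : Prop :=
  forall mu : nat -> R,
    rsum m mu = 0 -> vsum m (fun i => vscal (mu i) (v i)) = vzero ->
    forall i, (i < m)%nat -> mu i = 0.

Definition is_simplex {V : RVectorSpace} (K : V -> Prop) : Prop :=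
  exists (m : nat) (v : nat -> V),
    (1 <= m)%nat /\ affinely_independent m v /\
    forall x, K x <-> exists lam, in_std_simplex m lam /\
                                  x = vsum m (fun i => vscal (lam i) (v i)).

Definition continuous_on_01 (h : R -> R) : Prop :=
  forall t, 0 <= t <= 1 -> forall eps, 0 < eps ->
    exists delta, 0 < delta /\
      forall s, 0 <= s <= 1 -> Rabs (s - t) < delta -> Rabs (h s - h t) < eps.

Definition simplex_bijection (n : nat) (g : nat -> R -> R) : Prop :=
  (forall lam, in_std_simplex n lam -> in_std_simplex n (fun i => g i (lam i))) /\
  (forall lam mu, in_std_simplex n lam -> in_std_simplex n mu ->
     (forall i, (i < n)%nat -> g i (lam i) = g i (mu i)) ->
     forall i, (i < n)%nat -> lam i = mu i) /\
  (forall nu, in_std_simplex n nu ->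
     exists lam, in_std_simplex n lam /\
       forall i, (i < n)%nat -> g i (lam i) = nu i).

(* Weakly naturally quasiconvex correspondence T : X -> 2^Y,
   with T x y meaning y \in T(x). *)
Definition WNQ {V W : RVectorSpace} (X : V -> Prop) (Y : W -> Prop)
  (T : V -> W -> Prop) : Prop :=
  forall (n : nat) (x : nat -> V),
    (1 <= n)%nat ->
    (forall i, (i < n)%nat -> X (x i)) ->
    (forall i j, (i < n)%nat -> (j < n)%nat -> x i = x j -> i = j) ->
    exists (y : nat -> W) (g : nat -> R -> R),
      (forall i, (i < n)%nat -> T (x i) (y i)) /\
      (forall i, (i < n)%nat ->
         continuous_on_01 (g i) /\
         (forall t, 0 <= t <= 1 -> 0 <= g i t <= 1) /\
         g i 0 = 0 /\ g i 1 = 1) /\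
      simplex_bijection n g /\
      (forall lam, in_std_simplex n lam ->
         T (vsum n (fun i => vscal (lam i) (x i)))
           (vsum n (fun i => vscal (g i (lam i)) (y i)))).

(* Main.v *)
Require Import Defs.
From Stdlib Require Import Reals Lra Lia Arith ZArith IndefiniteDescription.
Open Scope R_scope.

Lemma rsum_ext n f h : (forall i, (i < n)%nat -> f i = h i) -> rsum n f = rsum n h.
Proof. induction n; simpl; intros H; auto. rewrite IHn by (intros; apply H; lia). rewrite H by lia. auto. Qed.

Lemma rsum_plus n f h : rsum n (fun i => f i + h i) = rsum n f + rsum n h.
Proof. induction n; simpl; [lra|]. rewrite IHn; lra. Qed.

Lemma rsum_mult n c f : rsum n (fun i => c * f i) = c * rsum n f.
Proof. induction n; simpl; [lra|]. rewrite IHn; lra. Qed.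

Lemma rsum_zero n : rsum n (fun _ => 0) = 0.
Proof. induction n; simpl; lra. Qed.

Lemma rsum_swap n m (f : nat -> nat -> R) :
  rsum n (fun i => rsum m (fun j => f i j)) = rsum m (fun j => rsum n (fun i => f i j)).
Proof. induction n; simpl. rewrite rsum_zero; auto. rewrite IHn, <- rsum_plus. auto. Qed.

Lemma rsum_nonneg n f : (forall i, (i < n)%nat -> 0 <= f i) -> 0 <= rsum n f.
Proof. induction n; simpl; intros H; [lra|]. pose proof (H n ltac:(lia)). pose proof (IHn ltac:(intros; apply H; lia)). lra. Qed.

Lemma rsum_le_term n f a : (forall i, (i < n)%nat -> 0 <= f i) -> (a < n)%nat -> f a <= rsum n f.
Proof. induction n; simpl; intros H Ha; [lia|].
  destruct (Nat.eq_dec a n). subst. pose proof (rsum_nonneg n f ltac:(intros; apply H; lia)). lra.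
  pose proof (IHn ltac:(intros; apply H; lia) ltac:(lia)). pose proof (H n ltac:(lia)). lra. Qed.

Lemma rsum_single n a c : (a < n)%nat -> rsum n (fun i => if Nat.eqb i a then c else 0) = c.
Proof. induction n; simpl; intros Ha; [lia|].
  destruct (Nat.eqb_spec n a). subst.
  rewrite (rsum_ext _ _ (fun _ => 0)). rewrite rsum_zero; lra.
  intros i Hi. destruct (Nat.eqb_spec i a); [lia|auto].
  rewrite IHn by lia. lra. Qed.

Lemma rsum_zero_ext n f : (forall i, (i < n)%nat -> f i = 0) -> rsum n f = 0.
Proof. intros H. rewrite (rsum_ext _ _ (fun _ => 0)) by auto. apply rsum_zero. Qed.

Lemma rsum_S n f : rsum (S n) f = rsum n f + f n.
Proof. reflexivity. Qed.

Lemma stationary k (P : nat -> nat -> R) :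
  (forall i j, (i < S k)%nat -> (j < S k)%nat -> 0 <= P i j) ->
  (forall i, (i < S k)%nat -> rsum (S k) (fun j => P i j) = 1) ->
  exists pi, in_std_simplex (S k) pi /\
    forall j, (j < S k)%nat -> rsum (S k) (fun i => pi i * P i j) = pi j.
Proof.
  revert P. induction k; intros P Hpos Hrow.
  - exists (fun _ => 1). split. split; simpl; [lra|intros; lra].
    intros j Hj. assert (j = 0%nat) by lia. subst. specialize (Hrow 0%nat ltac:(lia)). simpl in *. lra.
  - set (N := S k) in *.
    destruct (Req_dec (P N N) 1) as [E|E].
    + assert (Hz : forall j, (j < N)%nat -> P N j = 0).
      { intros j Hj. specialize (Hrow N ltac:(lia)). rewrite rsum_S in Hrow.
        pose proof (rsum_le_term N (fun j => P N j) j ltac:(intros; apply Hpos; lia) Hj).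
        pose proof (Hpos N j ltac:(lia) ltac:(lia)). fold N in Hrow. lra. }
      exists (fun i => if Nat.eqb i N then 1 else 0). split.
      * split. apply rsum_single; lia. intros i _. destruct (Nat.eqb i N); lra.
      * intros j Hj. rewrite (rsum_ext _ _ (fun i => if Nat.eqb i N then P N j else 0)).
        rewrite rsum_single by lia.
        destruct (Nat.eqb_spec j N). subst; auto. rewrite Hz by lia. auto.
        intros i Hi. destruct (Nat.eqb_spec i N). subst; lra. lra.
    + assert (HNN : P N N <= 1).
      { specialize (Hrow N ltac:(lia)). rewrite <- Hrow.
        apply (rsum_le_term (S N) (fun j => P N j)); [intros; apply Hpos; lia| lia]. }
      set (d := 1 - P N N). assert (Hd : 0 < d) by (unfold d; lra).
      set (P' := fun i j => P i j + P i N * P N j / d).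
      destruct (IHk P') as [pi' [[Hs Hnn] Hfix]].
      { intros i j Hi Hj. unfold P'. pose proof (Hpos i j ltac:(lia) ltac:(lia)).
        pose proof (Hpos i N ltac:(lia) ltac:(lia)). pose proof (Hpos N j ltac:(lia) ltac:(lia)).
        assert (0 <= P i N * P N j / d). { unfold Rdiv. apply Rmult_le_pos; [nra|]. left; apply Rinv_0_lt_compat; auto. }
        lra. }
      { intros i Hi. unfold P'. rewrite rsum_plus.
        unfold Rdiv. rewrite (rsum_ext _ (fun j => P i N * P N j * / d) (fun j => (P i N * / d) * P N j)) by (intros; ring).
        rewrite rsum_mult.
        pose proof (Hrow i ltac:(lia)) as H1. pose proof (Hrow N ltac:(lia)) as H2.
        rewrite rsum_S in H1, H2.
        replace (rsum N (fun j => P N j)) with d by (unfold d; lra).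
        change (rsum N (fun j => P i j)) with (rsum N (P i)) in H1.
        change (rsum N (fun j => P N j)) with (rsum N (P N)) in H2.
        replace (rsum N (P N)) with d by (unfold d; lra).
        rewrite Rmult_assoc, Rinv_l by lra. lra. }
      set (wN := rsum N (fun i => pi' i * P i N) / d).
      assert (HwN : 0 <= wN).
      { unfold wN, Rdiv. apply Rmult_le_pos. apply rsum_nonneg. intros i Hi.
        apply Rmult_le_pos; [apply Hnn; auto| apply Hpos; lia]. left; apply Rinv_0_lt_compat; auto. }
      set (s := 1 + wN).
      exists (fun i => (if Nat.ltb i N then pi' i else wN) / s).
      assert (Hs0 : 0 < s) by (unfold s; lra).
      assert (Hsum : rsum (S N) (fun i => if Nat.ltb i N then pi' i else wN) = s).
      { rewrite rsum_S, Nat.ltb_irrefl. rewrite (rsum_ext _ _ pi'). rewrite Hs. unfold s; lra.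
        intros i Hi. apply Nat.ltb_lt in Hi. rewrite Hi; auto. }
      split. split.
      * unfold Rdiv. rewrite (rsum_ext _ _ (fun i => / s * (if Nat.ltb i N then pi' i else wN))) by (intros; ring).
        rewrite rsum_mult, Hsum. field. lra.
      * intros i Hi. unfold Rdiv. apply Rmult_le_pos; [|left; apply Rinv_0_lt_compat; auto].
        destruct (Nat.ltb_spec i N); [apply Hnn; lia| auto].
      * intros j Hj. unfold Rdiv.
        rewrite (rsum_ext _ _ (fun i => / s * ((if Nat.ltb i N then pi' i else wN) * P i j))) by (intros; ring).
        rewrite rsum_mult, (Rmult_comm (/ s)). f_equal. rewrite rsum_S, Nat.ltb_irrefl.
        rewrite (rsum_ext N _ (fun i => pi' i * P i j)).
        2:{ intros i Hi. apply Nat.ltb_lt in Hi. rewrite Hi; auto. }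
        destruct (Nat.ltb_spec j N).
        -- specialize (Hfix j H). unfold P' in Hfix.
           rewrite <- Hfix.
           rewrite (rsum_ext N (fun i => pi' i * (P i j + P i N * P N j / d)) (fun i => pi' i * P i j + (P N j / d) * (pi' i * P i N))) by (intros; unfold Rdiv; ring).
           rewrite rsum_plus, rsum_mult. unfold wN. unfold Rdiv. ring.
        -- assert (j = N) by lia. subst j. unfold wN. unfold d in *. field. lra.
Qed.

Lemma floor_ex x : 0 <= x -> exists k : nat, INR k <= x < INR k + 1.
Proof.
  intros Hx. destruct (base_Int_part x) as [H1 H2].
  assert (Hz : (0 <= Int_part x)%Z).
  { assert (-1 < IZR (Int_part x)) by lra. apply lt_IZR in H. lia. }
  exists (Z.to_nat (Int_part x)). rewrite INR_IZR_INZ, Z2Nat.id by auto. lra.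
Qed.

Lemma add_lin (f : R -> R) :
  (forall t s, 0 <= t -> 0 <= s -> t + s <= 1 -> f (t + s) = f t + f s) ->
  f 1 = 1 -> (forall t, 0 <= t <= 1 -> 0 <= f t) ->
  forall t, 0 <= t <= 1 -> f t = t.
Proof.
  intros Hadd H1 Hpos.
  assert (H0 : f 0 = 0). { pose proof (Hadd 0 0 ltac:(lra) ltac:(lra) ltac:(lra)). rewrite Rplus_0_l in H. lra. }
  assert (Hmono : forall t t', 0 <= t -> t <= t' -> t' <= 1 -> f t <= f t').
  { intros t t' Ht Htt Ht'. replace t' with (t + (t' - t)) by ring.
    rewrite Hadd by lra. pose proof (Hpos (t' - t) ltac:(lra)). lra. }
  assert (Hmul : forall k x, 0 <= x -> INR k * x <= 1 -> f (INR k * x) = INR k * f x).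
  { induction k; intros x Hx Hk. simpl. rewrite !Rmult_0_l. auto.
    rewrite S_INR in *. replace ((INR k + 1) * x) with (INR k * x + x) by ring.
    pose proof (pos_INR k).
    rewrite Hadd. rewrite IHk; auto. ring. all: nra. }
  assert (Hfrac : forall N k, (1 <= N)%nat -> (k <= N)%nat -> f (INR k * / INR N) = INR k * / INR N).
  { intros N k HN Hk. assert (HN' : 1 <= INR N) by (apply (le_INR 1); auto).
    assert (Hinv : f (/ INR N) = / INR N).
    { pose proof (Hmul N (/ INR N)) as E. rewrite Rinv_r in E by lra.
      rewrite H1 in E. assert (E' : 1 = INR N * f (/ INR N)).
      { apply E. left; apply Rinv_0_lt_compat; lra. lra. }
      apply (Rmult_eq_reg_l (INR N)); [|lra]. rewrite Rinv_r by lra. lra. }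
    rewrite Hmul. rewrite Hinv; auto. left; apply Rinv_0_lt_compat; lra.
    apply le_INR in Hk. apply (Rmult_le_reg_r (INR N)). lra. rewrite Rmult_assoc, Rinv_l by lra. lra. }
  assert (Hbound : forall t N, 0 <= t <= 1 -> (1 <= N)%nat -> Rabs (f t - t) <= / INR N).
  { intros t N Ht HN. assert (HN' : 1 <= INR N) by (apply (le_INR 1); auto).
    assert (Hi : 0 < / INR N) by (apply Rinv_0_lt_compat; lra).
    destruct (floor_ex (t * INR N)) as [k [Hk1 Hk2]]. nra.
    assert (HkN : (k <= N)%nat). { apply INR_le. nra. }
    assert (Ekt : INR k * / INR N <= t).
    { apply (Rmult_le_reg_r (INR N)); [lra|]. rewrite Rmult_assoc, Rinv_l by lra. lra. }
    assert (Ekt2 : t < (INR k + 1) * / INR N).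
    { apply (Rmult_lt_reg_r (INR N)); [lra|]. rewrite Rmult_assoc, Rinv_l by lra. lra. }
    pose proof (Hmono _ _ (Rmult_le_pos _ _ (pos_INR k) (Rlt_le _ _ Hi)) Ekt ltac:(lra)).
    rewrite Hfrac in H by auto.
    destruct (Nat.eq_dec k N).
    - subst. rewrite Rinv_r in Ekt by lra. assert (t = 1) by lra. subst. rewrite H1, Rminus_diag, Rabs_R0. lra.
    - assert (Hk' : (S k <= N)%nat) by lia.
      pose proof (Hmono t (INR (S k) * / INR N) ltac:(lra)) as Hm. rewrite S_INR in Hm.
      rewrite <- S_INR in Hm. rewrite Hfrac in Hm by auto. rewrite S_INR in Hm.
      assert (f t <= (INR k + 1) * / INR N).
      { apply Hm. lra. apply (Rmult_le_reg_r (INR N)); [lra|]. rewrite Rmult_assoc, Rinv_l by lra.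
        apply le_INR in Hk'. rewrite S_INR in Hk'. lra. }
      apply Rabs_le. split; nra. }
  intros t Ht. destruct (Req_dec (f t) t) as [E|E]; auto. exfalso.
  set (d := Rabs (f t - t)). assert (Hd : 0 < d) by (apply Rabs_pos_lt; lra).
  destruct (floor_ex (/ d)) as [k [_ Hk]]. left; apply Rinv_0_lt_compat; auto.
  pose proof (Hbound t (S k) Ht ltac:(lia)). rewrite S_INR in H.
  pose proof (pos_INR k).
  assert (d * (INR k + 1) <= 1).
  { apply (Rmult_le_compat_r (INR k + 1)) in H; [|lra]. rewrite Rinv_l in H by lra. exact H. }
  apply (Rmult_lt_compat_l d) in Hk; auto. rewrite Rinv_r in Hk by lra. lra.
Qed.

Lemma rsum_three n a b c x y z : (a < n)%nat -> (b < n)%nat -> (c < n)%nat ->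
  a <> b -> a <> c -> b <> c ->
  rsum n (fun i => if Nat.eqb i a then x else if Nat.eqb i b then y else if Nat.eqb i c then z else 0) = x + y + z.
Proof.
  intros. rewrite (rsum_ext _ _ (fun i => (if Nat.eqb i a then x else 0) + (if Nat.eqb i b then y else 0) + (if Nat.eqb i c then z else 0))).
  rewrite !rsum_plus, !rsum_single; auto.
  intros i _. destruct (Nat.eqb_spec i a), (Nat.eqb_spec i b), (Nat.eqb_spec i c); subst; try lia; lra.
Qed.

Lemma g_id n (g : nat -> R -> R) : (3 <= n)%nat ->
  (forall i, (i < n)%nat -> g i 0 = 0 /\ g i 1 = 1 /\ forall t, 0 <= t <= 1 -> 0 <= g i t) ->
  (forall lam, in_std_simplex n lam -> rsum n (fun i => g i (lam i)) = 1) ->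
  forall i, (i < n)%nat -> forall t, 0 <= t <= 1 -> g i t = t.
Proof.
  intros Hn Hg Hs.
  assert (Htri : forall a b c t s, (a < n)%nat -> (b < n)%nat -> (c < n)%nat ->
     a <> b -> a <> c -> b <> c -> 0 <= t -> 0 <= s -> t + s <= 1 ->
     g a t + g b s + g c (1 - t - s) = 1).
  { intros a b c t s Ha Hb Hc Hab Hac Hbc Ht Hs0 Hts.
    set (lam := fun i => if Nat.eqb i a then t else if Nat.eqb i b then s else if Nat.eqb i c then 1 - t - s else 0).
    assert (Hl : in_std_simplex n lam).
    { split. unfold lam. rewrite rsum_three; auto. ring.
      intros i _. unfold lam. destruct (Nat.eqb i a), (Nat.eqb i b), (Nat.eqb i c); lra. }
    specialize (Hs lam Hl). transitivity (rsum n (fun i => g i (lam i))); [|exact Hs]. symmetry. rewrite <- (rsum_three n a b c (g a t) (g b s) (g c (1 - t - s)) Ha Hb Hc Hab Hac Hbc).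
    apply rsum_ext. intros i Hi. unfold lam.
    destruct (Nat.eqb_spec i a), (Nat.eqb_spec i b), (Nat.eqb_spec i c); subst; try lia; auto.
    apply Hg; auto. }
  intros a Ha.
  assert (exists b c, (b < n)%nat /\ (c < n)%nat /\ a <> b /\ a <> c /\ b <> c) as [b [c Hbc]].
  { destruct (Nat.eq_dec a 0). exists 1%nat, 2%nat; lia.
    destruct (Nat.eq_dec a 1). exists 0%nat, 2%nat; lia. exists 0%nat, 1%nat; lia. }
  destruct Hbc as (Hb & Hc & Hab & Hac & Hbc).
  destruct (Hg a Ha) as (Ga0 & Ga1 & Gapos). destruct (Hg b Hb) as (Gb0 & _ & _).
  apply add_lin; auto.
  intros t s Ht Hs0 Hts.
  pose proof (Htri a b c t s Ha Hb Hc Hab Hac Hbc Ht Hs0 Hts) as E1.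
  pose proof (Htri a b c (t + s) 0 Ha Hb Hc Hab Hac Hbc ltac:(lra) ltac:(lra) ltac:(lra)) as E2.
  pose proof (Htri a b c 0 s Ha Hb Hc Hab Hac Hbc ltac:(lra) Hs0 ltac:(lra)) as E3.
  pose proof (Htri a b c s 0 Ha Hb Hc Hab Hac Hbc Hs0 ltac:(lra) ltac:(lra)) as E4.
  replace (1 - (t + s) - 0) with (1 - t - s) in E2 by ring.
  replace (1 - 0 - s) with (1 - s - 0) in E3 by ring.
  rewrite Gb0 in E2, E4. rewrite Ga0 in E3. lra.
Qed.

Section V.
Context {V : RVectorSpace}.

Lemma vadd_zero_l (u : V) : vadd vzero u = u.
Proof. rewrite vadd_comm. apply vadd_zero. Qed.

Lemma vself (w : V) : vadd w w = w -> w = vzero.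
Proof. intros H. rewrite <- (vadd_zero _ w). rewrite <- (vadd_opp _ w) at 1.
  rewrite vadd_assoc, H. apply vadd_opp. Qed.

Lemma vscal_zero (u : V) : vscal 0 u = vzero.
Proof. apply vself. rewrite <- vscal_distr_r. f_equal. ring. Qed.

Lemma vscal_vzero a : vscal a (@vzero V) = vzero.
Proof. apply vself. rewrite <- vscal_distr_v, vadd_zero. auto. Qed.

Lemma vsum_ext n (f h : nat -> V) : (forall i, (i < n)%nat -> f i = h i) -> vsum n f = vsum n h.
Proof. induction n; simpl; intros H; auto. rewrite IHn by (intros; apply H; lia). rewrite H by lia. auto. Qed.

Lemma vsum_add n (f h : nat -> V) : vsum n (fun i => vadd (f i) (h i)) = vadd (vsum n f) (vsum n h).
Proof. induction n; simpl. rewrite vadd_zero; auto. rewrite IHn.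
  rewrite !vadd_assoc. f_equal. rewrite <- !vadd_assoc. f_equal. apply vadd_comm. Qed.

Lemma vsum_scal n c (f : nat -> V) : vsum n (fun i => vscal c (f i)) = vscal c (vsum n f).
Proof. induction n; simpl. rewrite vscal_vzero; auto. rewrite IHn, vscal_distr_v; auto. Qed.

Lemma vsum_zero n : vsum n (fun _ => @vzero V) = vzero.
Proof. induction n; simpl; auto. rewrite IHn, vadd_zero; auto. Qed.

Lemma vsum_swap n m (f : nat -> nat -> V) :
  vsum n (fun i => vsum m (fun j => f i j)) = vsum m (fun j => vsum n (fun i => f i j)).
Proof. induction n; simpl. rewrite vsum_zero; auto. rewrite IHn, <- vsum_add. auto. Qed.

Lemma vsum_single n a c (v : nat -> V) : (a < n)%nat ->
  vsum n (fun i => vscal (if Nat.eqb i a then c else 0) (v i)) = vscal c (v a).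
Proof. induction n; simpl; intros Ha; [lia|].
  destruct (Nat.eqb_spec n a). subst.
  rewrite (vsum_ext _ _ (fun _ => vzero)). rewrite vsum_zero, vadd_zero_l; auto.
  intros i Hi. destruct (Nat.eqb_spec i a); [lia|]. apply vscal_zero.
  rewrite IHn by lia. rewrite vscal_zero, vadd_zero. auto. Qed.

Lemma vscal_rsum n (c : nat -> R) (u : V) : vscal (rsum n c) u = vsum n (fun j => vscal (c j) u).
Proof. induction n; simpl. apply vscal_zero. rewrite vscal_distr_r, IHn; auto. Qed.

Lemma coords_unique m (v : nat -> V) al be : affinely_independent m v ->
  rsum m al = rsum m be ->
  vsum m (fun i => vscal (al i) (v i)) = vsum m (fun i => vscal (be i) (v i)) ->
  forall i, (i < m)%nat -> al i = be i.
Proof.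
  intros HA Hs Hv i Hi.
  assert (al i + (-1) * be i = 0); [|lra].
  apply (HA (fun i => al i + (-1) * be i)); auto.
  rewrite rsum_plus, rsum_mult. lra.
  rewrite (vsum_ext _ _ (fun k => vadd (vscal (al k) (v k)) (vscal (-1) (vscal (be k) (v k))))).
  rewrite vsum_add, vsum_scal, Hv. apply vadd_opp.
  intros k _. rewrite vscal_assoc, vscal_distr_r. auto.
Qed.
End V.

Theorem theorem4 (F : RVectorSpace) (K : F -> Prop) (T : F -> F -> Prop) :
  is_simplex K ->
  (forall x y, K x -> T x y -> K y) ->
  WNQ K K T ->
  exists xs, K xs /\ T xs xs.
Proof.
  intros [m [v [Hm [HAI HK]]]] Hcl HW.
  set (dl := fun i k => if Nat.eqb k i then 1 else 0).
  assert (Hvrep : forall i, (i < m)%nat -> v i = vsum m (fun k => vscal (dl i k) (v k))).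
  { intros i Hi. unfold dl. rewrite vsum_single, vscal_one; auto. }
  assert (Kv : forall i, (i < m)%nat -> K (v i)).
  { intros i Hi. apply HK. exists (dl i). split; [|apply Hvrep; auto].
    split. unfold dl. apply rsum_single; auto. intros k _. unfold dl. destruct (Nat.eqb k i); lra. }
  destruct (Nat.eq_dec m 1) as [E1|E1].
  - subst m. destruct (HW 1%nat (fun _ => v 0%nat)) as [y [g [Hy _]]]; [lia | intros; apply Kv; lia | intros; lia |].
    pose proof (Hy 0%nat ltac:(lia)) as Ty.
    destruct (proj1 (HK _) (Hcl _ _ (Kv 0%nat ltac:(lia)) Ty)) as [lam [[Hs _] Hyl]].
    simpl in Hs, Hyl. exists (v 0%nat). split. apply Kv; lia.
    replace (v 0%nat) with (y 0%nat) at 2; auto.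
    rewrite Hyl. replace (lam 0%nat) with 1 by lra. rewrite vadd_zero_l, vscal_one. auto.
  - assert (Hm2 : (2 <= m)%nat) by lia.
    set (c := fun k => if Nat.eqb k 0 then 1/2 else if Nat.eqb k 1 then 1/2 else 0).
    assert (Hcs : rsum m c = 1).
    { unfold c. rewrite (rsum_ext _ _ (fun k => (if Nat.eqb k 0 then 1/2 else 0) + (if Nat.eqb k 1 then 1/2 else 0))).
      rewrite rsum_plus, !rsum_single by lia. lra.
      intros k _. destruct (Nat.eqb_spec k 0), (Nat.eqb_spec k 1); subst; try lia; lra. }
    set (p := vsum m (fun k => vscal (c k) (v k))).
    assert (Kp : K p).
    { apply HK. exists c. split; auto. split; auto. intros k _. unfold c.
      destruct (Nat.eqb k 0); [lra|]. destruct (Nat.eqb k 1); lra. }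
    set (x := fun i => if Nat.ltb i m then v i else p).
    set (C := fun i k => if Nat.ltb i m then dl i k else c k).
    assert (Hxrep : forall i, (i < S m)%nat -> x i = vsum m (fun k => vscal (C i k) (v k))).
    { intros i Hi. unfold x, C. destruct (Nat.ltb_spec i m). apply Hvrep; auto. auto. }
    assert (HCs : forall i, (i < S m)%nat -> rsum m (C i) = 1).
    { intros i Hi. unfold C. destruct (Nat.ltb_spec i m); auto. unfold dl. apply rsum_single; auto. }
    destruct (HW (S m) x) as [y [g [Hy [Hg [Hbij Hlam]]]]].
    + lia.
    + intros i Hi. unfold x. destruct (Nat.ltb_spec i m); auto.
    + intros i j Hi Hj Exy.
      assert (HC : forall k, (k < m)%nat -> C i k = C j k).
      { apply (coords_unique m v); auto. rewrite HCs, HCs; auto. rewrite <- Hxrep, <- Hxrep; auto. }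
      assert (Hc01 : forall k, c k <> 1). { intros k. unfold c. destruct (Nat.eqb k 0); [lra|]. destruct (Nat.eqb k 1); lra. }
      unfold C, dl in HC.
      destruct (Nat.ltb_spec i m), (Nat.ltb_spec j m).
      * specialize (HC i H). rewrite Nat.eqb_refl in HC. destruct (Nat.eqb_spec i j); auto. lra.
      * specialize (HC i H). rewrite Nat.eqb_refl in HC. exfalso; apply (Hc01 i); auto.
      * specialize (HC j H0). rewrite Nat.eqb_refl in HC. exfalso; apply (Hc01 j); auto.
      * lia.
    + assert (Hgid : forall i, (i < S m)%nat -> forall t, 0 <= t <= 1 -> g i t = t).
      { apply g_id. lia. intros i Hi. destruct (Hg i Hi) as (_ & H1 & H2 & H3). repeat split; auto. apply H1; auto.
        intros lam Hl. apply (proj1 Hbij lam Hl). }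
      assert (HTlin : forall mu, in_std_simplex m mu ->
                T (vsum m (fun i => vscal (mu i) (v i))) (vsum m (fun i => vscal (mu i) (y i)))).
      { intros mu [Hms Hmn].
        set (lam := fun i => if Nat.ltb i m then mu i else 0).
        assert (Hl : in_std_simplex (S m) lam).
        { split. rewrite rsum_S. unfold lam at 2. rewrite Nat.ltb_irrefl.
          rewrite (rsum_ext _ _ mu). lra. intros i Hi. unfold lam. apply Nat.ltb_lt in Hi. rewrite Hi; auto.
          intros i _. unfold lam. destruct (Nat.ltb_spec i m); [apply Hmn; auto|lra]. }
        pose proof (Hlam lam Hl) as HT. simpl vsum in HT.
        unfold lam at 2 4 in HT. rewrite Nat.ltb_irrefl in HT.
        rewrite vscal_zero, vadd_zero in HT. rewrite (Hgid m ltac:(lia) 0 ltac:(lra)), vscal_zero, vadd_zero in HT.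
        rewrite (vsum_ext m (fun i => vscal (lam i) (x i)) (fun i => vscal (mu i) (v i))) in HT.
        rewrite (vsum_ext m (fun i => vscal (g i (lam i)) (y i)) (fun i => vscal (mu i) (y i))) in HT. exact HT.
        - intros i Hi. unfold lam. assert (Hi' := Hi). apply Nat.ltb_lt in Hi'. rewrite Hi'.
          rewrite Hgid by (lia || (split; [apply Hmn; auto| rewrite <- Hms; apply rsum_le_term; auto])). reflexivity.
        - intros i Hi. unfold lam, x. assert (Hi' := Hi). apply Nat.ltb_lt in Hi'. rewrite Hi'. reflexivity. }
      assert (Ky : forall i, (i < m)%nat -> exists a, in_std_simplex m a /\ y i = vsum m (fun j => vscal (a j) (v j))).
      { intros i Hi. apply HK. apply (Hcl (x i)). unfold x. apply Nat.ltb_lt in Hi as Hi'. rewrite Hi'. auto.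
        apply Hy; lia. }
      assert (Ky' : forall i, exists a, (i < m)%nat -> in_std_simplex m a /\ y i = vsum m (fun j => vscal (a j) (v j))).
      { intros i. destruct (Nat.ltb_spec i m). destruct (Ky i H) as [a Ha]. exists a; auto. exists (fun _ => 0). lia. }
      set (A := fun i => proj1_sig (constructive_indefinite_description _ (Ky' i))).
      assert (HA : forall i, (i < m)%nat -> in_std_simplex m (A i) /\ y i = vsum m (fun j => vscal (A i j) (v j))).
      { intros i Hi. unfold A. destruct (constructive_indefinite_description _ (Ky' i)) as [a Ha]. simpl. auto. }
      destruct m as [|k]; [lia|].
      destruct (stationary k A) as [pi [Hpi Hfix]].
      { intros i j Hi Hj. apply (proj2 (proj1 (HA i Hi))); auto. }
      { intros i Hi. apply (proj1 (proj1 (HA i Hi))). }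
      exists (vsum (S k) (fun i => vscal (pi i) (v i))). split.
      { apply HK. exists pi; auto. }
      replace (vsum (S k) (fun i => vscal (pi i) (v i))) with (vsum (S k) (fun i => vscal (pi i) (y i))) at 2.
      { apply HTlin; auto. }
      rewrite (vsum_ext _ _ (fun i => vsum (S k) (fun j => vscal (pi i * A i j) (v j)))).
      rewrite vsum_swap. apply vsum_ext. intros j Hj.
      rewrite <- vscal_rsum. rewrite Hfix; auto.
      intros i Hi. rewrite (proj2 (HA i Hi)). rewrite <- vsum_scal. apply vsum_ext. intros j _.
      apply vscal_assoc.
Qed.
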